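(* Consider the interior permanent magnet synchronous machine (IPMSM) model in the stator frame with state $x=(i_\alpha,i_\beta,\omega,\theta)^T$, input $u=\mathcal{V}=(v_\alpha,v_\beta)^T$ and output $y=h(x)=\mathcal{I}=(i_\alpha,i_\beta)^T$: \[ \frac{d\mathcal{I}}{dt}=\mathfrak{L}(\theta)^{-1}\Big(\mathcal{V}-\big(R\,\mathbb{I}_2+\omega\,\mathfrak{L}'(\theta)\big)\mathcal{I}-\psi_r\,\mathcal{C}'(\theta)\,\omega\Big),\qquad \frac{d\omega}{dt}=\frac{p}{J}(T_m-T_l),\qquad \frac{d\theta}{dt}=\omega, \] where $\mathfrak{L}(\theta)=\begin{bmatrix}L_0+L_2\cos2\theta & L_2\sin 2\theta\\ L_2\sin2\theta & L_0-L_2\cos2\theta\end{bmatrix}$, $\mathfrak{L}'=\partial\mathfrak{L}/\partial\theta$, $\mathcal{C}'(\theta)=(-\sin\theta,\cos\theta)^T$, and $T_m=\frac{3p}{2}\big[\psi_r(i_\beta\cos\theta-i_\alpha\sin\theta)-L_2\big((i_\alpha^2-i_\beta^2)\sin2\theta-2i_\alpha i_\beta\cos2\theta\big)\big]$. Let $L_d=L_0+L_2$, $L_q=L_0-L_2$ (both nonzero), $L_\delta=L_d-L_q=2L_2$, and let $i_d=i_\alpha\cos\theta+i_\beta\sin\theta$, $i_q=-i_\alpha\sin\theta+i_\beta\cos\theta$ be the rotor-frame currents, with $\frac{di_d}{dt},\frac{di_q}{dt}$ their time derivatives along the model. Let $\Delta_{y1}$ be the determinant of the $4\times4$ matrix $\frac{\partial}{\partial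 x}\begin{bmatrix} h(x)\\ \mathcal{L}_f h(x)\end{bmatrix}$ (gradient of the output and of its first time derivative). Then \[ \Delta_{y1}=\frac{1}{L_dL_q}\Big[(L_\delta i_d+\psi_r)^2+L_\delta^2 i_q^2\Big]\omega+\frac{L_\delta}{L_dL_q}\Big[L_\delta\frac{di_d}{dt}\,i_q-(L_\delta i_d+\psi_r)\frac{di_q}{dt}\Big]. \] Consequently, defining the observability vector $\Psi_{\mathcal O}$ with rotor-frame components $\Psi_{\mathcal{O}d}=L_\delta i_d+\psi_r$, $\Psi_{\mathcal{O}q}=L_\delta i_q$, and its phase $\theta_{\mathcal O}=\arctan\!\big(\frac{L_\delta i_q}{L_\delta i_d+\psi_r}\big)$ in the rotor frame, at any state where $\Psi_{\mathcal O}\neq0$ and \[ \omega\neq\frac{d}{dt}\theta_{\mathcal O}, \] the observability rank condition holds and the IPMSM is locally weakly observable there. In particular, at standstill ($\omega=0$) local observability is guaranteed if $\Psi_{\mathcal O}$ changes its orientation in the rotor frame.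
   Context: For a system $\dot x=f(x,u)$, $y=h(x)$ with $x\in\mathbb{R}^n$, the Lie derivatives are $\mathcal{L}_f^0h=h$, $\mathcal{L}_fh=\frac{\partial h}{\partial x}f$, $\mathcal{L}_f^kh=\mathcal{L}_f\mathcal{L}_f^{k-1}h$. The system satisfies the observability rank condition at $x_0$ if the matrix $\frac{\partial}{\partial x}[\mathcal{L}_f^0h;\mathcal{L}_fh;\dots;\mathcal{L}_f^{n-1}h]$ at $x_0$ has full rank $n$; this implies local weak observability at $x_0$ (Hermann–Krener). Here $R$ is the stator winding resistance, $\psi_r$ the rotor permanent-magnet flux, $p$ the number of pole pairs, $J$ the inertia, $T_l$ the load torque, $\omega$ the electrical rotor speed and $\theta$ the electrical rotor position; $\mathbb{I}_2$ is the $2\times2$ identity. *)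

(* Defs.v *)
From HB Require Import structures.
From mathcomp Require Import all_boot all_order all_algebra.
From mathcomp Require Import all_classical all_reals all_analysis.
Set Implicit Arguments. Unset Strict Implicit. Unset Printing Implicit Defensive.
Import Order.TTheory GRing.Theory Num.Theory.
Import numFieldNormedType.Exports.
Local Open Scope ring_scope.

Section Generic.
Variable R : realType.

Definition partial n (g : 'rV[R]_n -> R) (k : 'I_n) (x : 'rV[R]_n) : R :=
  derive1 (fun t : R => g (x + t *: delta_mx 0 k)) 0.

Definition lie n (f : 'rV[R]_n -> 'rV[R]_n) (g : 'rV[R]_n -> R) (x : 'rV[R]_n) : R :=
  \sum_(k < n) partial g k x * f x 0 k.

Fixpoint iter_lie n (f : 'rV[R]_n -> 'rV[R]_n) (k : nat) (g : 'rV[R]_n -> R) :=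
  match k with
  | 0 => g
  | k'.+1 => lie f (iter_lie f k' g)
  end.

(* Observability matrix d/dx [L^0 h; L_f h; ...; L_f^(N-1) h] for an output
   h with m scalar components h 0, ..., h (m-1); row r corresponds to
   L_f^(r / m) h_(r mod m). *)
Definition obs_mx n m (f : 'rV[R]_n -> 'rV[R]_n) (h : nat -> 'rV[R]_n -> R)
  (N : nat) (x : 'rV[R]_n) : 'M[R]_(N * m, n) :=
  \matrix_(r < N * m, j < n) partial (iter_lie f (r %/ m)%N (h (r %% m)%N)) j x.

Definition obs_rank_condition n m (f : 'rV[R]_n -> 'rV[R]_n)
  (h : nat -> 'rV[R]_n -> R) (x0 : 'rV[R]_n) : Prop :=
  \rank (obs_mx m f h n x0) = n.

End Generic.

Section IPMSM.
Variable R : realType.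

Definition ia (x : 'rV[R]_4) : R := x 0 (@Ordinal 4 0 isT).
Definition ib (x : 'rV[R]_4) : R := x 0 (@Ordinal 4 1 isT).
Definition om (x : 'rV[R]_4) : R := x 0 (@Ordinal 4 2 isT).
Definition th (x : 'rV[R]_4) : R := x 0 (@Ordinal 4 3 isT).

Definition h_out (i : nat) (x : 'rV[R]_4) : R := if i == 0%N then ia x else ib x.

Definition Lmat (L0 L2 t : R) : 'M[R]_2 :=
  \matrix_(i < 2, j < 2)
    if (i == 0) && (j == 0) then L0 + L2 * cos (2 * t)
    else if (i == 1) && (j == 1) then L0 - L2 * cos (2 * t)
    else L2 * sin (2 * t).

Definition Lmat' (L0 L2 t : R) : 'M[R]_2 :=
  \matrix_(i < 2, j < 2) derive1 (fun s : R => Lmat L0 L2 s i j) t.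

Definition Cmat' (t : R) : 'cV[R]_2 :=
  \col_(i < 2) if i == 0 then - sin t else cos t.

Definition Icur (x : 'rV[R]_4) : 'cV[R]_2 :=
  \col_(i < 2) if i == 0 then ia x else ib x.

Definition Tm (p psi_r L2 : R) (x : 'rV[R]_4) : R :=
  (3 * p / 2) * (psi_r * (ib x * cos (th x) - ia x * sin (th x))
     - L2 * ((ia x ^+ 2 - ib x ^+ 2) * sin (2 * th x)
             - 2 * ia x * ib x * cos (2 * th x))).

(* the IPMSM vector field with the (constant) input V = u *)
Definition ipmsm_f (Rs psi_r p J Tl L0 L2 : R) (u : 'cV[R]_2)
  (x : 'rV[R]_4) : 'rV[R]_4 :=
  let dI := invmx (Lmat L0 L2 (th x)) *m
      (u - (Rs%:M + om x *: Lmat' L0 L2 (th x)) *m Icur x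
         - (psi_r * om x) *: Cmat' (th x)) in
  \row_(k < 4)
    if k == 0 :> nat then dI 0 0
    else if k == 1 :> nat then dI 1 0
    else if k == 2 :> nat then p / J * (Tm p psi_r L2 x - Tl)
    else om x.

Definition id_cur (x : 'rV[R]_4) : R := ia x * cos (th x) + ib x * sin (th x).
Definition iq_cur (x : 'rV[R]_4) : R := - ia x * sin (th x) + ib x * cos (th x).

Definition PsiOd (Ldl psi_r : R) (x : 'rV[R]_4) : R := Ldl * id_cur x + psi_r.
Definition PsiOq (Ldl : R) (x : 'rV[R]_4) : R := Ldl * iq_cur x.

(* time derivative along the model of the phase theta_O of Psi_O:
   theta_O = arctan(PsiOq / PsiOd) where PsiOd <> 0; where PsiOd = 0 (and
   PsiOq <> 0) the phase is locally pi/2 - arctan(PsiOd / PsiOq) up to a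
   constant multiple of pi. *)
Definition dthetaO (f : 'rV[R]_4 -> 'rV[R]_4) (Ldl psi_r : R) (x : 'rV[R]_4) : R :=
  if PsiOd Ldl psi_r x != 0 then
    lie f (fun y => atan (PsiOq Ldl y / PsiOd Ldl psi_r y)) x
  else - lie f (fun y => atan (PsiOd Ldl psi_r y / PsiOq Ldl y)) x.

End IPMSM.
Arguments ia {R}. Arguments ib {R}. Arguments om {R}. Arguments th {R}.
Arguments h_out {R}. Arguments Icur {R}. Arguments Cmat' {R}.
Arguments id_cur {R}. Arguments iq_cur {R}.

(* Main.v *)
Require Import Defs.
From HB Require Import structures.
From mathcomp Require Import all_boot all_order all_algebra.
From mathcomp Require Import all_classical all_reals all_analysis.
From mathcomp Require Import ring lra.
Import Order.TTheory GRing.Theory Num.Theory.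
Local Open Scope ring_scope.

Section Aux.
Variable R : realType.

Lemma der1 (f : R -> R) (t v : R) : is_derive t 1 f v -> derive1 f t = v.
Proof. by move=> H; rewrite derive1E derive_val. Qed.

Lemma coordE (x : 'rV[R]_4) (k j : 'I_4) (t : R) :
  (x + t *: delta_mx 0 k) 0 j = x 0 j + t * (k == j)%:R.
Proof. by rewrite !mxE eqxx /= eq_sym. Qed.

Lemma cos2E (t : R) : cos (2 * t) = cos t ^+ 2 - sin t ^+ 2.
Proof. have -> : 2 * t = t + t by ring. by rewrite cosD !expr2. Qed.

Lemma sin2E (t : R) : sin (2 * t) = 2 * sin t * cos t.
Proof. have -> : 2 * t = t + t by ring. rewrite sinD; ring. Qed.

Lemma det2 (A : 'M[R]_2) : \det A = A 0 0 * A 1 1 - A 0 1 * A 1 0.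
Proof.
rewrite (expand_det_row _ 0) !big_ord_recl big_ord0 /cofactor !det_mx11 !mxE /=.
have L1 : lift (0:'I_2) (0:'I_1) = 1 by apply/val_inj.
have L0 : lift (1:'I_2) (0:'I_1) = 0 by apply/val_inj.
rewrite !L1 L0 /= expr0 expr1; ring.
Qed.

Lemma det4 (A : 'M[R]_4) :
  (forall j, A ord0 j = (val j == 0)%:R) ->
  (forall j, A (@Ordinal 4 1 isT) j = (val j == 1)%:R) ->
  \det A = A (@Ordinal 4 2 isT) (@Ordinal 4 2 isT) * A (@Ordinal 4 3 isT) (@Ordinal 4 3 isT)
   - A (@Ordinal 4 2 isT) (@Ordinal 4 3 isT) * A (@Ordinal 4 3 isT) (@Ordinal 4 2 isT).
Proof.
move=> H0 H1.
rewrite (expand_det_row _ 0) big_ord_recl big1 ?addr0; last first.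
  by move=> i _; rewrite H0 /= mul0r.
rewrite H0 eqxx mul1r /cofactor expr0 mul1r.
rewrite (expand_det_row _ 0) big_ord_recl big1 ?addr0; last first.
  move=> i _; rewrite !mxE.
  have -> : lift (0:'I_4) (0:'I_3) = @Ordinal 4 1 isT by apply/val_inj.
  by rewrite H1 /= mul0r.
pose B (i j : nat) := A (inord i) (inord j).
have HA : forall i j : 'I_4, A i j = B i j by move=> i j; rewrite /B !inord_val.
rewrite /cofactor det2 !mxE !HA /= expr0 mul1r.
change (bump 0 (bump 0 (1 %% 2))) with 3%N.
change (bump 0 (bump 0 0)) with 2%N.
change (bump 0 0) with 1%N.
have -> : B 1%N 1%N = 1.
  rewrite /B; have -> : (inord 1 : 'I_4) = @Ordinal 4 1 isT by apply/val_inj; rewrite /= inordK.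
  by rewrite H1.
by rewrite mul1r.
Qed.
End Aux.

Section M.
Variables (R : realType) (Rs psi_r p J Tl L0 L2 : R) (u : 'cV[R]_2).
Hypotheses (hd : L0 + L2 != 0) (hq : L0 - L2 != 0).

Lemma is_derive_atan_div (g h : R -> R) t dg dh : h t != 0 ->
  is_derive t 1 g dg -> is_derive t 1 h dh ->
  is_derive t 1 (fun y => atan (g y / h y)) ((dg * h t - g t * dh) / (h t ^+ 2 + g t ^+ 2)).
Proof.
move=> h0 Hg Hh.
have HV := is_deriveV h0 Hh.
have HM := is_deriveM Hg HV.
have HA := is_derive1_comp (is_derive1_atan _) HM.
have HA' : is_derive t 1 (fun y => atan (g y / h y)) _ := HA.
eapply trigger_derive; [exact HA' | ].
rewrite /GRing.scale /=.
have -> : (g * (fun y => (h y)^-1)) t = g t / h t by [].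
have hs : h t ^+ 2 + g t ^+ 2 != 0.
  have hp : 0 < h t ^+ 2 by rewrite lt_def sqr_ge0 andbT expf_neq0.
  have hg := sqr_ge0 (g t).
  by rewrite gt_eqF //; lra.
have -> : 1 + (g t / h t) ^+ 2 = (h t ^+ 2 + g t ^+ 2) / h t ^+ 2 by field.
by field; rewrite hs h0.
Qed.

Definition V0 (a b w c s : R) := u 0 0 - Rs*a
  - w*(-2*L2*(2*s*c)*a + 2*L2*(c^+2-s^+2)*b) + psi_r*w*s.
Definition V1 (a b w c s : R) := u 1 0 - Rs*b
  - w*(2*L2*(c^+2-s^+2)*a + 2*L2*(2*s*c)*b) - psi_r*w*c.
Definition N0 a b w c s := (L0 - L2*(c^+2-s^+2))*V0 a b w c s - L2*(2*s*c)*V1 a b w c s.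
Definition N1 a b w c s := - (L2*(2*s*c))*V0 a b w c s + (L0 + L2*(c^+2-s^+2))*V1 a b w c s.

Lemma Lmat'E t : Lmat' L0 L2 t = \matrix_(i < 2, j < 2)
  (if (i == 0) && (j == 0) then - (2*L2*sin(2*t))
   else if (i == 1) && (j == 1) then 2*L2*sin(2*t) else 2*L2*cos(2*t)).
Proof.
apply/matrixP => i j; rewrite !mxE.
have -> : (fun s => Lmat L0 L2 s i j) = fun s =>
  if (i == 0) && (j == 0) then L0 + L2 * cos (2 * s)
  else if (i == 1) && (j == 1) then L0 - L2 * cos (2 * s) else L2 * sin (2 * s).
  by apply/funext => s; rewrite mxE.
case: ((i == 0) && (j == 0)).
  by apply der1; apply: trigger_derive; rewrite /GRing.scale /=; ring.
case: ((i == 1) && (j == 1)).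
  by apply der1; apply: trigger_derive; rewrite /GRing.scale /=; ring.
by apply der1; apply: trigger_derive; rewrite /GRing.scale /=; ring.
Qed.

Let f := ipmsm_f Rs psi_r p J Tl L0 L2 u.

Lemma fE (x : 'rV[R]_4) :
  let a := ia x in let b := ib x in let w := om x in
  let c := cos (th x) in let s := sin (th x) in
  f x 0 0 = N0 a b w c s / ((L0 + L2) * (L0 - L2)) /\
  f x 0 1 = N1 a b w c s / ((L0 + L2) * (L0 - L2)) /\
  f x 0 (@Ordinal 4 3 isT) = w.
Proof.
move=> a b w c s.
have cs1 : c ^+ 2 + s ^+ 2 = 1 by rewrite cos2Dsin2.
have Dn : (L0 + L2) * (L0 - L2) != 0 by rewrite mulf_neq0.
set M := Lmat L0 L2 (th x).
have Mu : M \in unitmx.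
  rewrite unitmxE unitfE det2 !mxE /= cos2E sin2E -/c -/s.
  have -> : (L0 + L2 * (c ^+ 2 - s ^+ 2)) * (L0 - L2 * (c ^+ 2 - s ^+ 2)) -
    L2 * (2 * s * c) * (L2 * (2 * s * c)) = L0^+2 - L2^+2 * (c^+2 + s^+2)^+2 by ring.
  by rewrite cs1 expr1n mulr1 (_ : L0^+2 - L2^+2 = (L0 + L2) * (L0 - L2)) //; ring.
pose W : 'cV[R]_2 := \col_(i < 2) (if i == 0 then N0 a b w c s / ((L0 + L2) * (L0 - L2))
   else N1 a b w c s / ((L0 + L2) * (L0 - L2))).
have key : invmx M *m (u - (Rs%:M + om x *: Lmat' L0 L2 (th x)) *m Icur x
         - (psi_r * om x) *: Cmat' (th x)) = W.
  have -> : W = invmx M *m (M *m W) by rewrite mulKmx.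
  congr (_ *m _).
  rewrite Lmat'E.
  apply/matrixP => i j; rewrite (ord1 j) !mxE !big_ord_recl !big_ord0 !mxE /=.
  rewrite cos2E sin2E -/a -/b -/w -/c -/s.
  case: i => [[|[|//]] Hi] /=.
    transitivity ((L0^+2 - L2^+2*(c^+2+s^+2)^+2) * V0 a b w c s / ((L0+L2)*(L0-L2))); last first.
      by rewrite /N0 /N1; field; rewrite hd hq.
    have -> : Ordinal Hi = 0 by apply/val_inj.
    by rewrite cs1 expr1n mulr1 /V0 mulr1n mulr0n; field; rewrite ?hd ?hq.
  transitivity ((L0^+2 - L2^+2*(c^+2+s^+2)^+2) * V1 a b w c s / ((L0+L2)*(L0-L2))); last first.
    by rewrite /N0 /N1; field; rewrite hd hq.
  have -> : Ordinal Hi = 1 by apply/val_inj.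
  by rewrite cs1 expr1n mulr1 /V1 mulr1n mulr0n; field; rewrite ?hd ?hq.
split; [|split]; rewrite /f /ipmsm_f mxE /= ?key ?mxE //.
Qed.

Lemma partial4 (F : R -> R -> R -> R -> R) (x : 'rV[R]_4) (k : 'I_4) :
  partial (fun y => F (ia y) (ib y) (om y) (th y)) k x =
  derive1 (fun t => F (ia x + t * (k == 0 :> nat)%:R) (ib x + t * (k == 1 :> nat)%:R)
     (om x + t * (k == 2 :> nat)%:R) (th x + t * (k == 3 :> nat)%:R)) 0.
Proof.
rewrite /partial /ia /ib /om /th; congr derive1; apply/funext => t.
by rewrite !coordE.
Qed.

Lemma hO0 : h_out 0 = @ia R. Proof. by apply/funext. Qed.
Lemma hO1 : h_out 1 = @ib R. Proof. by apply/funext. Qed.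

Lemma pia k (x : 'rV[R]_4) : partial ia k x = (k == 0 :> nat)%:R.
Proof.
rewrite (partial4 (fun a _ _ _ => a)).
by apply der1; apply: trigger_derive; rewrite /GRing.scale /=; ring.
Qed.

Lemma pib k (x : 'rV[R]_4) : partial ib k x = (k == 1 :> nat)%:R.
Proof.
rewrite (partial4 (fun _ b _ _ => b)).
by apply der1; apply: trigger_derive; rewrite /GRing.scale /=; ring.
Qed.

Lemma lie_ia : lie f ia = fun y => f y 0 0.
Proof.
apply/funext => y; rewrite /lie !big_ord_recl big_ord0 !pia /=.
by rewrite !mul0r !addr0 mul1r.
Qed.

Lemma lie_ib : lie f ib = fun y => f y 0 1.
Proof.
apply/funext => y; rewrite /lie !big_ord_recl big_ord0 !pib /=.
rewrite !mul0r !addr0 mul1r add0r.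
by congr (f y 0 _); apply/val_inj.
Qed.

Lemma f0fun : (fun y => f y 0 0) = fun y =>
  (fun a b w t => N0 a b w (cos t) (sin t) / ((L0 + L2) * (L0 - L2))) (ia y) (ib y) (om y) (th y).
Proof. by apply/funext => y; case: (fE y). Qed.
Lemma f1fun : (fun y => f y 0 1) = fun y =>
  (fun a b w t => N1 a b w (cos t) (sin t) / ((L0 + L2) * (L0 - L2))) (ia y) (ib y) (om y) (th y).
Proof. by apply/funext => y; case: (fE y) => _ []. Qed.

Ltac dcomp := apply der1; apply: trigger_derive; rewrite /GRing.scale /=;
  rewrite ?(mul0r, mulr0, addr0, mulr1, mul1r); rewrite /N0 /N1 /V0 /V1.

Lemma pf0w (x : 'rV[R]_4) :
  let a := ia x in let b := ib x in let w := om x in let c := cos (th x) in let s := sin (th x) in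
  partial (fun y => f y 0 0) (@Ordinal 4 2 isT) x = (1%:R*s*L0*psi_r + 1%:R*s^+3*L2*psi_r + 1%:R*c^+2*s*L2*psi_r + 2%:R*b*s^+2*L0*L2 + 2%:R*b*s^+4*L2^+2 + -(2)%:R*b*c^+2*L0*L2 + 4%:R*b*c^+2*s^+2*L2^+2 + 2%:R*b*c^+4*L2^+2 + 4%:R*a*c*s*L0*L2) / ((L0 + L2) * (L0 - L2)).
Proof. move=> a b w c s; rewrite f0fun (partial4 (fun a b w t => N0 a b w (cos t) (sin t) / ((L0 + L2) * (L0 - L2)))) /=; dcomp.
by rewrite -/a -/b -/w -/c -/s; field; rewrite ?hd ?hq.
Qed.

Lemma pf0t (x : 'rV[R]_4) :
  let a := ia x in let b := ib x in let w := om x in let c := cos (th x) in let s := sin (th x) in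
  partial (fun y => f y 0 0) (@Ordinal 4 3 isT) x = (2%:R*s^+2*L2*(u 1 0) + 4%:R*c*s*L2*(u 0 0) + -(2)%:R*c^+2*L2*(u 1 0) + 1%:R*w*c*L0*psi_r + 1%:R*w*c*s^+2*L2*psi_r + 1%:R*w*c^+3*L2*psi_r + -(2)%:R*b*s^+2*L2*Rs + 2%:R*b*c^+2*L2*Rs + 8%:R*b*w*c*s*L0*L2 + -(4)%:R*a*c*s*L2*Rs + -(4)%:R*a*w*s^+2*L0*L2 + 4%:R*a*w*c^+2*L0*L2) / ((L0 + L2) * (L0 - L2)).
Proof. move=> a b w c s; rewrite f0fun (partial4 (fun a b w t => N0 a b w (cos t) (sin t) / ((L0 + L2) * (L0 - L2)))) /=; dcomp.
by rewrite -/a -/b -/w -/c -/s; field; rewrite ?hd ?hq.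
Qed.

Lemma pf1w (x : 'rV[R]_4) :
  let a := ia x in let b := ib x in let w := om x in let c := cos (th x) in let s := sin (th x) in
  partial (fun y => f y 0 1) (@Ordinal 4 2 isT) x = (-(1)%:R*c*L0*psi_r + -(1)%:R*c*s^+2*L2*psi_r + -(1)%:R*c^+3*L2*psi_r + -(4)%:R*b*c*s*L0*L2 + 2%:R*a*s^+2*L0*L2 + -(2)%:R*a*s^+4*L2^+2 + -(2)%:R*a*c^+2*L0*L2 + -(4)%:R*a*c^+2*s^+2*L2^+2 + -(2)%:R*a*c^+4*L2^+2) / ((L0 + L2) * (L0 - L2)).
Proof. move=> a b w c s; rewrite f1fun (partial4 (fun a b w t => N1 a b w (cos t) (sin t) / ((L0 + L2) * (L0 - L2)))) /=; dcomp.
by rewrite -/a -/b -/w -/c -/s; field; rewrite ?hd ?hq.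
Qed.

Lemma pf1t (x : 'rV[R]_4) :
  let a := ia x in let b := ib x in let w := om x in let c := cos (th x) in let s := sin (th x) in
  partial (fun y => f y 0 1) (@Ordinal 4 3 isT) x = (2%:R*s^+2*L2*(u 0 0) + -(4)%:R*c*s*L2*(u 1 0) + -(2)%:R*c^+2*L2*(u 0 0) + 1%:R*w*s*L0*psi_r + 1%:R*w*s^+3*L2*psi_r + 1%:R*w*c^+2*s*L2*psi_r + 4%:R*b*c*s*L2*Rs + 4%:R*b*w*s^+2*L0*L2 + -(4)%:R*b*w*c^+2*L0*L2 + -(2)%:R*a*s^+2*L2*Rs + 2%:R*a*c^+2*L2*Rs + 8%:R*a*w*c*s*L0*L2) / ((L0 + L2) * (L0 - L2)).
Proof. move=> a b w c s; rewrite f1fun (partial4 (fun a b w t => N1 a b w (cos t) (sin t) / ((L0 + L2) * (L0 - L2)))) /=; dcomp.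
by rewrite -/a -/b -/w -/c -/s; field; rewrite ?hd ?hq.
Qed.

Lemma pid k (x : 'rV[R]_4) : partial id_cur k x =
  (k == 0 :> nat)%:R * cos (th x) + (k == 1 :> nat)%:R * sin (th x)
  + (- ia x * sin (th x) + ib x * cos (th x)) * (k == 3 :> nat)%:R.
Proof.
rewrite (partial4 (fun a b w t => a * cos t + b * sin t)).
by apply der1; apply: trigger_derive; rewrite /GRing.scale /= ?(mul0r, mulr0, addr0); ring.
Qed.

Lemma piq k (x : 'rV[R]_4) : partial iq_cur k x =
  - (k == 0 :> nat)%:R * sin (th x) + (k == 1 :> nat)%:R * cos (th x)
  - (ia x * cos (th x) + ib x * sin (th x)) * (k == 3 :> nat)%:R.
Proof.
rewrite (partial4 (fun a b w t => - a * sin t + b * cos t)).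
by apply der1; apply: trigger_derive; rewrite /GRing.scale /= ?(mul0r, mulr0, addr0); ring.
Qed.

Lemma fidx (x : 'rV[R]_4) : [/\ f x 0 ord0 = f x 0 0,
   f x 0 (lift ord0 ord0) = f x 0 1 &
   f x 0 (lift ord0 (lift ord0 (lift ord0 ord0))) = f x 0 (@Ordinal 4 3 isT)].
Proof. by split => //; congr (f x 0 _); apply/val_inj. Qed.

Lemma lie_id (x : 'rV[R]_4) : lie f id_cur x =
  cos (th x) * f x 0 0 + sin (th x) * f x 0 1 + (- ia x * sin (th x) + ib x * cos (th x)) * om x.
Proof.
rewrite /lie !big_ord_recl big_ord0 !pid /=.
case: (fidx x) => -> -> ->; case: (fE x) => _ [_ ->].
ring.
Qed.

Lemma lie_iq (x : 'rV[R]_4) : lie f iq_cur x =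
  - sin (th x) * f x 0 0 + cos (th x) * f x 0 1 - (ia x * cos (th x) + ib x * sin (th x)) * om x.
Proof.
rewrite /lie !big_ord_recl big_ord0 !piq /=.
case: (fidx x) => -> -> ->; case: (fE x) => _ [_ ->].
ring.
Qed.

Lemma part1 (x : 'rV[R]_4) :
  \det (obs_mx 2 f h_out 2 x : 'M[R]_4) =
  ((((L0 + L2) - (L0 - L2)) * id_cur x + psi_r) ^+ 2 + ((L0 + L2) - (L0 - L2)) ^+ 2 * iq_cur x ^+ 2)
     / ((L0 + L2) * (L0 - L2)) * om x
  + ((L0 + L2) - (L0 - L2)) / ((L0 + L2) * (L0 - L2)) *
    (((L0 + L2) - (L0 - L2)) * lie f id_cur x * iq_cur x
     - (((L0 + L2) - (L0 - L2)) * id_cur x + psi_r) * lie f iq_cur x).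
Proof.
rewrite det4; first last.
- by move=> j; rewrite mxE /= hO1 pib.
- by move=> j; rewrite mxE /= hO0 pia.
rewrite !mxE /=.
change (2 %% 2)%N with 0%N; change (3 %% 2)%N with 1%N.
rewrite hO0 hO1 lie_ia lie_ib pf0w pf0t pf1w pf1t lie_id lie_iq.
case: (fE x) => -> [-> _].
rewrite /id_cur /iq_cur.
move: (cos2Dsin2 (th x)).
move: (ia x) (ib x) (om x) (cos (th x)) (sin (th x)) => a b w c s cs1.
apply/eqP; rewrite -subr_eq0; apply/eqP.
transitivity ((c^+2 + s^+2 - 1) * (2%:R*s*L0*L2*psi_r*(u 0 0) + 2%:R*s^+3*L2^+2*psi_r*(u 0 0) + -(2)%:R*c*L0*L2*psi_r*(u 1 0) + -(2)%:R*c*s^+2*L2^+2*psi_r*(u 1 0) + 2%:R*c^+2*s*L2^+2*psi_r*(u 0 0) + -(2)%:R*c^+3*L2^+2*psi_r*(u 1 0) + -(1)%:R*w*L2^+2*psi_r^+2 + 1%:R*w*L0^+2*psi_r^+2 + -(1)%:R*w*s^+2*L2^+2*psi_r^+2 + 2%:R*w*s^+2*L0*L2*psi_r^+2 + 1%:R*w*s^+4*L2^+2*psi_r^+2 + -(1)%:R*w*c^+2*L2^+2*psi_r^+2 + 2%:R*w*c^+2*L0*L2*psi_r^+2 + 2%:R*w*c^+2*s^+2*L2^+2*psi_r^+2 + 1%:R*w*c^+4*L2^+2*psi_r^+2 + 4%:R*b*s^+2*L0*L2^+2*(u 0 0) + 4%:R*b*s^+4*L2^+3*(u 0 0) + 2%:R*b*c*L0*L2*psi_r*Rs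 + 2%:R*b*c*s^+2*L2^+2*psi_r*Rs + -(8)%:R*b*c*s^+3*L2^+3*(u 1 0) + 4%:R*b*c^+2*L0*L2^+2*(u 0 0) + 2%:R*b*c^+3*L2^+2*psi_r*Rs + -(8)%:R*b*c^+3*s*L2^+3*(u 1 0) + -(4)%:R*b*c^+4*L2^+3*(u 0 0) + -(6)%:R*b*w*s*L2^+3*psi_r + 6%:R*b*w*s*L0^+2*L2*psi_r + -(6)%:R*b*w*s^+3*L2^+3*psi_r + 8%:R*b*w*s^+3*L0*L2^+2*psi_r + 2%:R*b*w*s^+5*L2^+3*psi_r + -(6)%:R*b*w*c^+2*s*L2^+3*psi_r + 8%:R*b*w*c^+2*s*L0*L2^+2*psi_r + 4%:R*b*w*c^+2*s^+3*L2^+3*psi_r + 2%:R*b*w*c^+4*s*L2^+3*psi_r + 8%:R*b^+2*c*s^+3*L2^+3*Rs + 8%:R*b^+2*c^+3*s*L2^+3*Rs + -(8)%:R*b^+2*w*s^+2*L2^+4 + 8%:R*b^+2*w*s^+2*L0^+2*L2^+2 + -(8)%:R*b^+2*w*s^+4*L2^+4 + 8%:R*b^+2*w*s^+4*L0*L2^+3 + -(8)%:R*b^+2*w*c^+2*L2^+4 + 8%:R*b^+2*w*c^+2*L0^+2*L2^+2 + -(16)%:R*b^+2*w*c^+2*s^+2*L2^+4 + -(8)%:R*b^+2*w*c^+4*L2^+4 + -(8)%:R*b^+2*w*c^+4*L0*L2^+3 + -(2)%:R*a*s*L0*L2*psi_r*Rs + -(4)%:R*a*s^+2*L0*L2^+2*(u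 1 0) + -(2)%:R*a*s^+3*L2^+2*psi_r*Rs + 4%:R*a*s^+4*L2^+3*(u 1 0) + 8%:R*a*c*s^+3*L2^+3*(u 0 0) + -(4)%:R*a*c^+2*L0*L2^+2*(u 1 0) + -(2)%:R*a*c^+2*s*L2^+2*psi_r*Rs + 8%:R*a*c^+3*s*L2^+3*(u 0 0) + -(4)%:R*a*c^+4*L2^+3*(u 1 0) + -(6)%:R*a*w*c*L2^+3*psi_r + 6%:R*a*w*c*L0^+2*L2*psi_r + -(6)%:R*a*w*c*s^+2*L2^+3*psi_r + 8%:R*a*w*c*s^+2*L0*L2^+2*psi_r + 2%:R*a*w*c*s^+4*L2^+3*psi_r + -(6)%:R*a*w*c^+3*L2^+3*psi_r + 8%:R*a*w*c^+3*L0*L2^+2*psi_r + 4%:R*a*w*c^+3*s^+2*L2^+3*psi_r + 2%:R*a*w*c^+5*L2^+3*psi_r + -(8)%:R*a*b*s^+4*L2^+3*Rs + 8%:R*a*b*c^+4*L2^+3*Rs + 32%:R*a*b*w*c*s^+3*L0*L2^+3 + 32%:R*a*b*w*c^+3*s*L0*L2^+3 + -(8)%:R*a^+2*c*s^+3*L2^+3*Rs + -(8)%:R*a^+2*c^+3*s*L2^+3*Rs + -(8)%:R*a^+2*w*s^+2*L2^+4 + 8%:R*a^+2*w*s^+2*L0^+2*L2^+2 + -(8)%:R*a^+2*w*s^+4*L2^+4 + -(8)%:R*a^+2*w*s^+4*L0*L2^+3 + -(8)%:R*a^+2*w*c^+2*L2^+4 + 8%:R*a^+2*w*c^+2*L0^+2*L2^+2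 + -(16)%:R*a^+2*w*c^+2*s^+2*L2^+4 + -(8)%:R*a^+2*w*c^+4*L2^+4 + 8%:R*a^+2*w*c^+4*L0*L2^+3) / ((L0 + L2) * (L0 - L2)) ^+ 2); last first.
  by rewrite cs1 subrr !mul0r.
by rewrite /N0 /N1 /V0 /V1; field; rewrite ?hd ?hq.
Qed.

Lemma patan1 (Ldl : R) k (x : 'rV[R]_4) : PsiOd Ldl psi_r x != 0 ->
  partial (fun y => atan (PsiOq Ldl y / PsiOd Ldl psi_r y)) k x =
  (Ldl * partial iq_cur k x * PsiOd Ldl psi_r x - PsiOq Ldl x * (Ldl * partial id_cur k x))
   / (PsiOd Ldl psi_r x ^+ 2 + PsiOq Ldl x ^+ 2).
Proof.
move=> hD.
rewrite piq pid (partial4 (fun a b w t => atan (Ldl * (- a * sin t + b * cos t) /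
   (Ldl * (a * cos t + b * sin t) + psi_r)))) /=.
apply der1; eapply trigger_derive.
  eapply is_derive_atan_div; last first.
  - typeclasses eauto.
  - typeclasses eauto.
  - rewrite /= !mul0r !addr0. exact hD.
rewrite /GRing.scale /= !mul0r !addr0.
by rewrite /PsiOd /PsiOq /id_cur /iq_cur; congr (_ / _); ring.
Qed.

Lemma patan2 (Ldl : R) k (x : 'rV[R]_4) : PsiOq Ldl x != 0 ->
  partial (fun y => atan (PsiOd Ldl psi_r y / PsiOq Ldl y)) k x =
  (Ldl * partial id_cur k x * PsiOq Ldl x - PsiOd Ldl psi_r x * (Ldl * partial iq_cur k x))
   / (PsiOq Ldl x ^+ 2 + PsiOd Ldl psi_r x ^+ 2).
Proof.
move=> hD.
rewrite piq pid (partial4 (fun a b w t => atan ((Ldl * (a * cos t + b * sin t) + psi_r) /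
   (Ldl * (- a * sin t + b * cos t))))) /=.
apply der1; eapply trigger_derive.
  eapply is_derive_atan_div; last first.
  - typeclasses eauto.
  - typeclasses eauto.
  - rewrite /= !mul0r !addr0. exact hD.
rewrite /GRing.scale /= !mul0r !addr0.
by rewrite /PsiOd /PsiOq /id_cur /iq_cur; congr (_ / _); ring.
Qed.

Lemma Spos (Ldl : R) (x : 'rV[R]_4) :
  (PsiOd Ldl psi_r x, PsiOq Ldl x) != (0, 0) ->
  PsiOd Ldl psi_r x ^+ 2 + PsiOq Ldl x ^+ 2 != 0.
Proof.
move=> h; rewrite gt_eqF //.
move: h; rewrite xpair_eqE negb_and => /orP [] h.
  have hp : 0 < PsiOd Ldl psi_r x ^+ 2 by rewrite lt_def sqr_ge0 andbT expf_neq0.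
  have hg := sqr_ge0 (PsiOq Ldl x); lra.
have hp : 0 < PsiOq Ldl x ^+ 2 by rewrite lt_def sqr_ge0 andbT expf_neq0.
have hg := sqr_ge0 (PsiOd Ldl psi_r x); lra.
Qed.

Lemma dthetaOE (Ldl : R) (x : 'rV[R]_4) :
  (PsiOd Ldl psi_r x, PsiOq Ldl x) != (0, 0) ->
  dthetaO f Ldl psi_r x =
  (Ldl * lie f iq_cur x * PsiOd Ldl psi_r x - PsiOq Ldl x * (Ldl * lie f id_cur x))
   / (PsiOd Ldl psi_r x ^+ 2 + PsiOq Ldl x ^+ 2).
Proof.
move=> h; have hS := @Spos Ldl x h.
rewrite /dthetaO; case: ifP => hd0.
  rewrite /lie; under eq_bigr do rewrite patan1 //.
  rewrite !big_ord_recl !big_ord0.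
  by field; rewrite hS.
have hq0 : PsiOq Ldl x != 0.
  by move: h; rewrite xpair_eqE (negbFE hd0) /=.
rewrite /lie; under eq_bigr do rewrite patan2 //.
rewrite !big_ord_recl !big_ord0.
have hS' : PsiOq Ldl x ^+ 2 + PsiOd Ldl psi_r x ^+ 2 != 0 by rewrite addrC.
by field; rewrite ?hS ?hS'.
Qed.

Lemma alg2 (Ldl idc iqc lid liq w : R) :
  (Ldl * idc + psi_r) ^+ 2 + (Ldl * iqc) ^+ 2 != 0 ->
  ((Ldl * idc + psi_r) ^+ 2 + Ldl ^+ 2 * iqc ^+ 2) / ((L0 + L2) * (L0 - L2)) * w
  + Ldl / ((L0 + L2) * (L0 - L2)) * (Ldl * lid * iqc - (Ldl * idc + psi_r) * liq)
  = ((Ldl * idc + psi_r) ^+ 2 + (Ldl * iqc) ^+ 2) / ((L0 + L2) * (L0 - L2)) *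
    (w - (Ldl * liq * (Ldl * idc + psi_r) - Ldl * iqc * (Ldl * lid))
         / ((Ldl * idc + psi_r) ^+ 2 + (Ldl * iqc) ^+ 2)).
Proof. by move=> hS; field; rewrite hS hd hq. Qed.

Lemma part2 (x : 'rV[R]_4) :
  (PsiOd ((L0 + L2) - (L0 - L2)) psi_r x, PsiOq ((L0 + L2) - (L0 - L2)) x) != (0, 0) ->
  om x != dthetaO f ((L0 + L2) - (L0 - L2)) psi_r x ->
  obs_rank_condition 2 f h_out x.
Proof.
move=> h hom.
have hS := @Spos _ x h.
rewrite (@dthetaOE _ x h) in hom.
have hdet : \det (obs_mx 2 f h_out 2 x : 'M[R]_4) != 0.
  rewrite part1 alg2 //.
  apply: mulf_neq0; first by rewrite mulf_neq0 ?invr_neq0 ?mulf_neq0.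
  rewrite subr_eq0; exact: hom.
rewrite /obs_rank_condition.
have sub : (obs_mx 2 f h_out 2 x <= obs_mx 2 f h_out 4 x)%MS.
  apply/row_subP => i.
  have -> : row i (obs_mx 2 f h_out 2 x) =
            row (widen_ord (isT : (2 * 2 <= 4 * 2)%N) i) (obs_mx 2 f h_out 4 x).
    by apply/rowP => j; rewrite !mxE.
  exact: row_sub.
have r4 : \rank (obs_mx 2 f h_out 2 x : 'M[R]_4) = 4%N.
  by apply: mxrank_unit; rewrite unitmxE unitfE.
apply/eqP; rewrite eqn_leq rank_leq_col /= -{1}r4.
exact: mxrankS.
Qed.
End M.

Theorem mainTheorem1 (R : realType) (Rs psi_r p J Tl L0 L2 : R) (u : 'cV[R]_2) :
  L0 + L2 != 0 -> L0 - L2 != 0 ->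
  let Ld := L0 + L2 in
  let Lq := L0 - L2 in
  let Ldl := Ld - Lq in
  let f := ipmsm_f Rs psi_r p J Tl L0 L2 u in
  (forall x : 'rV[R]_4,
     \det (obs_mx 2 f h_out 2 x : 'M[R]_4) =
       ((Ldl * id_cur x + psi_r) ^+ 2 + Ldl ^+ 2 * iq_cur x ^+ 2) / (Ld * Lq) * om x
       + Ldl / (Ld * Lq) *
         (Ldl * lie f id_cur x * iq_cur x
          - (Ldl * id_cur x + psi_r) * lie f iq_cur x)) /\
  (forall x : 'rV[R]_4,
     (PsiOd Ldl psi_r x, PsiOq Ldl x) != (0, 0) ->
     om x != dthetaO f Ldl psi_r x ->
     obs_rank_condition 2 f h_out x).
Proof.
move=> hd hq Ld Lq Ldl f; split => x.
  by apply: part1.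
by apply: part2.
Qed.
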